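(* Let $0<q<\infty$. Then $\frac{\pi_{2q/(2+q),q/2}}{2^{2/q+1}}=\frac{\pi_{2q/(2+q),q}}{2}$, and for all $x\in\left[0,\frac{\pi_{2q/(2+q),q}}{2}\right)$, $$\sin_{2q/(2+q),q/2}(2^{2/q}x)=\frac{2^{2/q}\sin_{2q/(2+q),q}x}{(1+\sin_{2q/(2+q),q}^{q/2}x)^{2/q}},\qquad \cos_{2q/(2+q),q/2}(2^{2/q}x)=\left(\frac{1-\sin_{2q/(2+q),q}^{q/2}x}{1+\sin_{2q/(2+q),q}^{q/2}x}\right)^{1/q+1/2}.$$ Moreover, for the same $x$, $$\sinh_{2q/(2+q),q/2}(2^{2/q}x)=2^{2/q}\sinh_{2,q}x\,(\cosh_{2,q}x+\sinh_{2,q}^{q/2}x)^{2/q},\qquad \cosh_{2q/(2+q),q/2}(2^{2/q}x)=(\cosh_{2,q}x+\sinh_{2,q}^{q/2}x)^{2/q+1}.$$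
   Context: For $0<q<\infty$ and $\frac{q}{q+1}<p<\infty$: let $F_{p,q}(y)=\int_0^y (1-t^q)^{-1/p}\,dt$ for $y\in[0,1)$ and $\pi_{p,q}=2\int_0^1(1-t^q)^{-1/p}\,dt\in(0,\infty]$ (it equals $\infty$ when $p\le 1$). The function $\sin_{p,q}:[0,\pi_{p,q}/2)\to[0,1)$ is the inverse of $F_{p,q}$ and $\cos_{p,q}x=\frac{d}{dx}\sin_{p,q}x$. Let $G_{p,q}(y)=\int_0^y(1+t^q)^{-1/p}\,dt$ for $y\in[0,\infty)$; its range is $[0,\pi_{r,q}/2)$ with $r=\frac{pq}{pq+p-q}$. The function $\sinh_{p,q}:[0,\pi_{r,q}/2)\to[0,\infty)$ is the inverse of $G_{p,q}$ and $\cosh_{p,q}x=\frac{d}{dx}\sinh_{p,q}x$. (The parameter pairs $(2q/(2+q),q/2)$, $(2q/(2+q),q)$ and $(2,q)$ all satisfy $\frac{q'}{q'+1}<p'<\infty$ for the respective second parameter $q'$.) *)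

(* Defs.v *)
From Stdlib Require Import Reals Lra ClassicalEpsilon.
From Coquelicot Require Import Coquelicot.
Open Scope R_scope.

(* Real power x^a for x >= 0 (with 0^a = 0, used only for a > 0).
   Stdlib's Rpower 0 a = 1, hence the guard. *)
Definition pw (x a : R) : R := if Rlt_dec 0 x then Rpower x a else 0.

Definition F_pq (p q y : R) : R :=
  RInt (fun t => pw (1 - pw t q) (- / p)) 0 y.

(* pi_{p,q} = 2 int_0^1 (1 - t^q)^(-1/p) dt in (0, +oo]: the improper
   integral of a positive integrand = sup of F_{p,q} over [0,1). *)
Definition pi_pq (p q : R) : Rbar :=
  Rbar_mult 2 (Lub_Rbar (fun z => exists y, 0 <= y < 1 /\ z = F_pq p q y)).

Definition sin_pq (p q x : R) : R :=
  epsilon (inhabits 0) (fun y => 0 <= y < 1 /\ F_pq p q y = x).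

Definition G_pq (p q y : R) : R :=
  RInt (fun t => pw (1 + pw t q) (- / p)) 0 y.

(* sinh_{p,q} : [0, pi_{r,q}/2) -> [0,oo), inverse of G_{p,q}. *)
Definition sinh_pq (p q x : R) : R :=
  epsilon (inhabits 0) (fun y => 0 <= y /\ G_pq p q y = x).

Definition r_of (p q : R) : R := p * q / (p * q + p - q).

Definition is_derive_dom (f : R -> R) (b : Rbar) (x l : R) : Prop :=
  filterlim (fun y => (f y - f x) / (y - x))
    (within (fun y => 0 <= y /\ Rbar_lt y b /\ y <> x) (locally x))
    (locally l).

Definition is_cos_pq (p q x l : R) : Prop :=
  is_derive_dom (sin_pq p q) (Rbar_mult (/ 2) (pi_pq p q)) x l.

Definition is_cosh_pq (p q x l : R) : Prop :=
  is_derive_dom (sinh_pq p q) (Rbar_mult (/ 2) (pi_pq (r_of p q) q)) x l.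

(* Main.v *)
Require Import Defs.
From Stdlib Require Import Reals Lra ClassicalEpsilon Classical.
From Coquelicot Require Import Coquelicot.
Open Scope R_scope.

Lemma pw_pos x a : 0 < x -> pw x a = exp (a * ln x).
Proof. intros h; unfold pw; destruct (Rlt_dec 0 x); [reflexivity|lra]. Qed.
Lemma pw_nonpos x a : x <= 0 -> pw x a = 0.
Proof. intros h; unfold pw; destruct (Rlt_dec 0 x); [lra|reflexivity]. Qed.
Lemma pw_gt0 x a : 0 < x -> 0 < pw x a.
Proof. intros h; rewrite pw_pos by exact h; apply exp_pos. Qed.
Lemma pw_ge0 x a : 0 <= pw x a.
Proof. destruct (Rlt_dec 0 x). left; now apply pw_gt0. rewrite pw_nonpos; lra. Qed.
Lemma ln_pw x a : 0 < x -> ln (pw x a) = a * ln x.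
Proof. intros h; rewrite pw_pos by exact h; apply ln_exp. Qed.

Lemma Rabs_lt_ball (x y e : R) : Rabs (y - x) < e -> ball x e y.
Proof. intros h. exact h. Qed.
Lemma ball_Rabs_lt (x y e : R) : ball x e y -> Rabs (y - x) < e.
Proof. intros h. exact h. Qed.

Lemma continuous_ext_loc (f g : R -> R) x :
  locally x (fun t => f t = g t) -> continuous f x -> continuous g x.
Proof.
  intros H Hf. unfold continuous in *.
  assert (E : g x = f x). { symmetry. apply (locally_singleton _ _ H). }
  rewrite E. eapply filterlim_ext_loc. exact H. exact Hf.
Qed.

Lemma pw_cont_pos x a : 0 < x -> continuous (fun t => pw t a) x.
Proof.
  intros hx. apply continuous_ext_loc with (fun t => exp (a * ln t)).
  - apply locally_interval with 0 p_infty; simpl; auto.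
    intros y hy _. now rewrite pw_pos.
  - apply continuous_exp_comp.
    apply (continuous_mult (fun _ => a) ln). apply continuous_const.
    now apply continuous_ln.
Qed.

Lemma pw_cont0 a : 0 < a -> continuous (fun t => pw t a) 0.
Proof.
  intros ha. unfold continuous. rewrite (pw_nonpos 0 a) by lra.
  apply filterlim_locally. intros eps.
  assert (hd : 0 < exp (ln eps / a)) by apply exp_pos.
  exists (mkposreal _ hd). intros t ht. apply ball_Rabs_lt in ht. simpl in ht.
  apply Rabs_lt_ball.
  destruct (Rle_dec t 0) as [h|h].
  - rewrite pw_nonpos by lra. rewrite Rminus_0_r, Rabs_R0. apply cond_pos.
  - rewrite pw_pos by lra. rewrite Rminus_0_r, Rabs_pos_eq by (left; apply exp_pos).
    rewrite Rminus_0_r, Rabs_pos_eq in ht by lra.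
    rewrite <- (exp_ln eps) by apply cond_pos. apply exp_increasing.
    assert (ln t < ln eps / a).
    { rewrite <- (ln_exp (ln eps / a)). apply ln_increasing; lra. }
    apply (Rmult_lt_compat_l a) in H; [|lra]. field_simplify in H; lra.
Qed.

Lemma pw_cont x a : 0 < a -> continuous (fun t => pw t a) x.
Proof.
  intros ha. destruct (Rtotal_order x 0) as [h|[h|h]].
  - apply continuous_ext_loc with (fun _ => 0).
    + apply locally_interval with m_infty 0; simpl; auto.
      intros y _ hy. rewrite pw_nonpos; lra.
    + apply continuous_const.
  - subst; now apply pw_cont0.
  - now apply pw_cont_pos.
Qed.

Definition fF (P Q t : R) := pw (1 - pw t Q) (- / P).
Definition fG (P Q t : R) := pw (1 + pw t Q) (- / P).

Lemma pw_lt1 t Q : 0 < Q -> t < 1 -> pw t Q < 1.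
Proof.
  intros hQ ht. destruct (Rle_dec t 0). rewrite pw_nonpos; lra.
  rewrite pw_pos by lra. rewrite <- exp_0. apply exp_increasing.
  assert (ln t < 0). { rewrite <- ln_1. apply ln_increasing; lra. }
  nra.
Qed.

Lemma fF_pos P Q t : 0 < Q -> t < 1 -> 0 < fF P Q t.
Proof. intros. unfold fF. apply pw_gt0. pose proof (pw_lt1 t Q H H0); lra. Qed.
Lemma fG_pos P Q t : 0 < fG P Q t.
Proof. unfold fG. apply pw_gt0. pose proof (pw_ge0 t Q); lra. Qed.

Lemma cont_minus (f g : R -> R) x : continuous f x -> continuous g x -> continuous (fun t => f t - g t) x.
Proof. intros. apply (continuous_minus f g x); auto. Qed.
Lemma cont_plus (f g : R -> R) x : continuous f x -> continuous g x -> continuous (fun t => f t + g t) x.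
Proof. intros. apply (continuous_plus f g x); auto. Qed.
Lemma cont_mult (f g : R -> R) x : continuous f x -> continuous g x -> continuous (fun t => f t * g t) x.
Proof. intros. apply (continuous_mult f g x); auto. Qed.
Lemma cont_div (f g : R -> R) x : continuous f x -> continuous g x -> g x <> 0 -> continuous (fun t => f t / g t) x.
Proof. intros. apply cont_mult; auto. now apply continuous_Rinv_comp. Qed.
Lemma cont_pw_comp (f : R -> R) a x : continuous f x -> (0 < a \/ 0 < f x) -> continuous (fun t => pw (f t) a) x.
Proof.
  intros hf h. apply (continuous_comp f (fun t => pw t a)); auto.
  destruct h. now apply pw_cont. now apply pw_cont_pos.
Qed.

Lemma fF_cont P Q t : 0 < Q -> t < 1 -> continuous (fF P Q) t.
Proof.
  intros hQ ht. unfold fF. apply cont_pw_comp.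
  apply cont_minus. apply continuous_const. now apply pw_cont.
  right. pose proof (pw_lt1 t Q hQ ht); lra.
Qed.
Lemma fG_cont P Q t : 0 < Q -> continuous (fG P Q) t.
Proof.
  intros hQ. unfold fG. apply cont_pw_comp.
  apply cont_plus. apply continuous_const. now apply pw_cont.
  right. pose proof (pw_ge0 t Q); lra.
Qed.

Lemma F_deriv P Q z : 0 < Q -> z < 1 -> is_derive (F_pq P Q) z (fF P Q z).
Proof.
  intros hQ hz. apply (is_derive_RInt (fF P Q) (F_pq P Q) 0 z).
  - apply locally_interval with m_infty 1; simpl; auto.
    intros b _ hb. unfold F_pq. apply (RInt_correct (fF P Q)).
    apply ex_RInt_continuous. intros y hy. apply fF_cont; auto.
    assert (Rmax 0 b < 1) by (apply Rmax_lub_lt; lra). lra.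
  - now apply fF_cont.
Qed.
Lemma G_deriv P Q z : 0 < Q -> is_derive (G_pq P Q) z (fG P Q z).
Proof.
  intros hQ. apply (is_derive_RInt (fG P Q) (G_pq P Q) 0 z).
  - apply locally_interval with m_infty p_infty; simpl; auto.
    intros b _ _. unfold G_pq. apply (RInt_correct (fG P Q)).
    apply ex_RInt_continuous. intros y hy. now apply fG_cont.
  - now apply fG_cont.
Qed.

Lemma cont_pt_of (f : R -> R) x : continuous f x -> continuity_pt f x.
Proof. intros h. now apply continuity_pt_filterlim. Qed.

Lemma strict_of_deriv (f df : R -> R) (D : R -> Prop) a b :
  (forall x, a <= x <= b -> is_derive f x (df x) /\ 0 < df x) -> a < b -> f a < f b.
Proof.
  intros H hab. destruct (MVT_gen f a b df) as [c [hc E]].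
  - intros x hx. rewrite Rmin_left, Rmax_right in hx by lra. apply H; lra.
  - intros x hx. rewrite Rmin_left, Rmax_right in hx by lra. apply cont_pt_of.
    apply (ex_derive_continuous (K:=R_AbsRing) (V:=R_NormedModule) f x). exists (df x). apply H; lra.
  - rewrite Rmin_left, Rmax_right in hc by lra. destruct (H c hc). nra.
Qed.

Lemma F_strict P Q a b : 0 < Q -> a < b -> b < 1 -> F_pq P Q a < F_pq P Q b.
Proof.
  intros hQ hab hb. apply (strict_of_deriv _ (fF P Q) (fun _ => True)); auto.
  intros x hx. split. apply F_deriv; lra. apply fF_pos; lra.
Qed.
Lemma G_strict P Q a b : 0 < Q -> a < b -> G_pq P Q a < G_pq P Q b.
Proof.
  intros hQ hab. apply (strict_of_deriv _ (fG P Q) (fun _ => True)); auto.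
  intros x hx. split. apply G_deriv; lra. apply fG_pos.
Qed.
Lemma F_0 P Q : F_pq P Q 0 = 0.
Proof. unfold F_pq. apply (RInt_point (V:=R_CompleteNormedModule)). Qed.
Lemma G_0 P Q : G_pq P Q 0 = 0.
Proof. unfold G_pq. apply (RInt_point (V:=R_CompleteNormedModule)). Qed.
Lemma F_inj P Q a b : 0 < Q -> a < 1 -> b < 1 -> F_pq P Q a = F_pq P Q b -> a = b.
Proof.
  intros. destruct (Rtotal_order a b) as [h|[h|h]]; auto.
  pose proof (F_strict P Q a b H h H1); lra.
  pose proof (F_strict P Q b a H h H0); lra.
Qed.
Lemma G_inj P Q a b : 0 < Q -> G_pq P Q a = G_pq P Q b -> a = b.
Proof.
  intros. destruct (Rtotal_order a b) as [h|[h|h]]; auto.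
  pose proof (G_strict P Q a b H h); lra.
  pose proof (G_strict P Q b a H h); lra.
Qed.

Lemma Rbar_room (z : R) (A : Rbar) d : Rbar_lt z A -> 0 < d -> exists e, 0 < e <= d /\ Rbar_lt (z + e) A.
Proof.
  intros h hd. destruct A as [a| |]; simpl in *.
  - exists (Rmin d ((a - z)/2)). split. split. apply Rmin_pos; lra. apply Rmin_l.
    pose proof (Rmin_r d ((a-z)/2)). lra.
  - exists d. auto with real.
  - contradiction.
Qed.

Lemma inv_deriv (Phi inv : R -> R) (A B : Rbar) y0 l :
  (forall y, 0 <= y -> Rbar_lt y B -> 0 <= inv y /\ Rbar_lt (inv y) A /\ Phi (inv y) = y) ->
  (forall a b, 0 <= a -> a < b -> Rbar_lt b A -> Phi a < Phi b) ->
  is_derive Phi (inv y0) l -> 0 < l -> 0 <= y0 -> Rbar_lt y0 B ->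
  is_derive_dom inv B y0 (/ l).
Proof.
  intros Hinv Hmono Hd hl hy0 hyB.
  assert (Hle : forall a b, 0 <= a -> a <= b -> Rbar_lt b A -> Phi a <= Phi b).
  { intros a b ha hab hb. destruct hab. left; auto. subst; lra. }
  destruct (Hinv y0 hy0 hyB) as [hz0 [hzA hPz0]].
  set (z0 := inv y0) in *.
  apply is_derive_Reals in Hd.
  unfold is_derive_dom. apply filterlim_locally. intros eps.
  set (eta := Rmin (l/2) (eps * l * l / 4)).
  assert (heps4 : 0 < eps * l * l / 4) by (pose proof (cond_pos eps); apply Rdiv_lt_0_compat; [repeat apply Rmult_lt_0_compat|]; lra).
  assert (heta : 0 < eta) by (apply Rmin_pos; lra).
  destruct (Hd eta heta) as [d1 Hd1].
  destruct (Rbar_room z0 A (d1/2) hzA) as [e [[he he2] heA]]. pose proof (cond_pos d1); lra.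
  set (dup := Phi (z0 + e) - y0).
  assert (hdup : 0 < dup). { unfold dup. rewrite <- hPz0. pose proof (Hmono z0 (z0+e) hz0 ltac:(lra) heA). lra. }
  set (dlow := if Rle_dec 0 (z0 - e) then y0 - Phi (z0 - e) else 1).
  assert (hdlow : 0 < dlow).
  { unfold dlow. destruct (Rle_dec 0 (z0 - e)). rewrite <- hPz0. pose proof (Hmono (z0 - e) z0 r ltac:(lra) hzA). lra. lra. }
  assert (hd2 : 0 < Rmin dup dlow) by (apply Rmin_pos; auto).
  exists (mkposreal _ hd2). intros y hy [hy1 [hy2 hy3]].
  apply ball_Rabs_lt in hy. simpl in hy.
  pose proof (Rmin_l dup dlow). pose proof (Rmin_r dup dlow).
  destruct (Hinv y hy1 hy2) as [hz [hzA' hPz]].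
  set (z := inv y) in *.
  assert (hzc : Rabs (z - z0) < d1).
  { apply Rabs_def1.
    - destruct (Rlt_dec (z - z0) e). lra. exfalso.
      pose proof (Hle (z0 + e) z ltac:(lra) ltac:(lra) hzA').
      unfold dup in *. rewrite Rabs_lt_between in hy. lra.
    - destruct (Rlt_dec (- e) (z - z0)). lra. exfalso.
      pose proof (Hle z (z0 - e) hz ltac:(lra) ltac:(destruct A; simpl in *; auto; lra)).
      unfold dlow in *. destruct (Rle_dec 0 (z0 - e)); [|lra].
      rewrite Rabs_lt_between in hy. lra. }
  assert (hzne : z - z0 <> 0). { intros E. apply hy3. rewrite <- hPz, <- hPz0. f_equal. lra. }
  specialize (Hd1 (z - z0) hzne hzc). replace (z0 + (z - z0)) with z in Hd1 by ring.
  rewrite hPz, hPz0 in Hd1.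
  set (D := (y - y0) / (z - z0)) in *.
  assert (hyne : y - y0 <> 0) by lra.
  apply Rabs_lt_ball. change (inv y0) with z0.
  replace ((z - z0) / (y - y0)) with (/ D) by (unfold D; field; auto).
  assert (hD : Rabs (D - l) < eta) by exact Hd1.
  assert (eta <= l/2) by apply Rmin_l. assert (eta <= eps * l * l / 4) by apply Rmin_r.
  rewrite Rabs_lt_between in hD.
  assert (hDp : l/2 < D) by lra.
  replace (/ D - / l) with ((l - D) / (D * l)) by (field; lra).
  rewrite Rabs_div by nra. rewrite (Rabs_pos_eq (D * l)) by nra.
  apply Rlt_div_l. nra.
  apply Rle_lt_trans with (eps * l * l / 4).
  - rewrite Rabs_le_between. lra.
  - pose proof (cond_pos eps). nra.
Qed.

Definition SF P Q := fun z => exists y, 0 <= y < 1 /\ z = F_pq P Q y.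

Lemma Rbar_mult_pinf c : 0 < c -> Rbar_mult c p_infty = p_infty.
Proof. intros h. rewrite Rbar_mult_comm. apply is_Rbar_mult_unique. apply is_Rbar_mult_p_infty_pos. exact h. Qed.
Lemma Rbar_mult_minf c : 0 < c -> Rbar_mult c m_infty = m_infty.
Proof. intros h. rewrite Rbar_mult_comm. apply is_Rbar_mult_unique. apply is_Rbar_mult_m_infty_pos. exact h. Qed.
Lemma Rbar_mult_mult a b x : 0 < a -> 0 < b -> Rbar_mult a (Rbar_mult b x) = Rbar_mult (a * b) x.
Proof.
  intros ha hb. destruct x as [x| |].
  - simpl. f_equal. ring.
  - rewrite !Rbar_mult_pinf; auto. nra.
  - rewrite !Rbar_mult_minf; auto. nra.
Qed.
Lemma Rbar_mult_1 x : Rbar_mult 1 x = x.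
Proof. destruct x as [x| |]. simpl. f_equal; ring. apply Rbar_mult_pinf; lra. apply Rbar_mult_minf; lra. Qed.

Lemma half_pi P Q : Rbar_mult (/ 2) (pi_pq P Q) = Lub_Rbar (SF P Q).
Proof.
  unfold pi_pq. rewrite Rbar_mult_mult by lra. replace (/2 * 2) with 1 by field. apply Rbar_mult_1.
Qed.

Lemma F_range P Q x : 0 < Q -> 0 <= x -> Rbar_lt x (Lub_Rbar (SF P Q)) ->
  exists y, 0 <= y < 1 /\ F_pq P Q y = x.
Proof.
  intros hQ hx hL.
  destruct (classic (exists z, SF P Q z /\ x < z)) as [[z [[y0 [hy0 ->]] hz]]|hn].
  - destruct hx as [hx| <-].
    + assert (hy0p : 0 < y0).
      { destruct (proj1 hy0) as [h|h]; auto. subst. rewrite F_0 in hz. lra. }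
      destruct (Ranalysis5.IVT_interv (fun t => F_pq P Q t - x) 0 y0) as [y [hy E]].
      * intros a ha. apply cont_pt_of. apply cont_minus; [|apply continuous_const].
        apply (ex_derive_continuous (K:=R_AbsRing) (V:=R_NormedModule)).
        eexists. apply F_deriv; lra.
      * lra.
      * rewrite F_0; lra.
      * lra.
      * exists y. split. lra. lra.
    + exists 0. split. lra. apply F_0.
  - exfalso. assert (is_ub_Rbar (SF P Q) x).
    { intros z hz. simpl. destruct (Rle_dec z x); auto. exfalso. apply hn. exists z. split; auto. lra. }
    pose proof (proj2 (Lub_Rbar_correct (SF P Q)) x H).
    exact (Rbar_lt_not_le _ _ hL H0).
Qed.

Lemma const0 (h : R -> R) b : (forall x, 0 < x < b -> is_derive h x 0) ->
  (forall x, 0 <= x < b -> continuous h x) -> h 0 = 0 -> forall x, 0 <= x < b -> h x = 0.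
Proof.
  intros Hd Hc h0 x [[hx|hx] hb]; [|subst; auto].
  destruct (MVT_gen h 0 x (fun _ => 0)) as [c [hc E]].
  - intros y hy. rewrite Rmin_left, Rmax_right in hy by lra. apply Hd; lra.
  - intros y hy. rewrite Rmin_left, Rmax_right in hy by lra. apply cont_pt_of, Hc; lra.
  - lra.
Qed.

Definition Yf Q s := s / pw (1 - pw s Q) (/ Q).

Lemma Y_deriv Q s : 0 < Q -> 0 < s < 1 -> is_derive (Yf Q) s (Yf Q s / (s * (1 - pw s Q))).
Proof.
  intros hQ hs.
  assert (Hloc : locally s (fun t => exp (ln t - / Q * ln (1 - exp (Q * ln t))) = Yf Q t)).
  { apply locally_interval with 0 1; simpl; try lra.
    intros t ht1 ht2. unfold Yf. rewrite (pw_pos t) by lra.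
    assert (0 < 1 - exp (Q * ln t)) by (pose proof (pw_lt1 t Q hQ ht2); rewrite pw_pos in H by lra; lra).
    rewrite pw_pos by lra. unfold Rminus at 1. rewrite exp_plus, exp_Ropp, exp_ln by lra. reflexivity. }
  assert (hW : 0 < 1 - exp (Q * ln s)) by (pose proof (pw_lt1 s Q hQ (proj2 hs)); rewrite pw_pos in H by lra; lra).
  eapply is_derive_ext_loc. exact Hloc.
  rewrite <- (locally_singleton _ _ Hloc). rewrite pw_pos by lra.
  auto_derive. repeat split; lra.
  set (W := exp (Q * ln s)) in *.
  set (E := exp (ln s + - (/ Q * ln (1 + - W)))).
  replace (exp (ln s - / Q * ln (1 - W))) with E by (unfold E; f_equal; ring).
  field. repeat split; lra.
Qed.

Lemma deriv_comp_minus (f g k : R -> R) x df dg dk :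
  is_derive f (g x) df -> is_derive g x dg -> is_derive k x dk -> dg * df - dk = 0 ->
  is_derive (fun t => f (g t) - k t) x 0.
Proof.
  intros Hf Hg Hk E. rewrite <- E.
  exact (is_derive_minus (fun t => f (g t)) k x (scal dg df) dk (is_derive_comp f g x df dg Hf Hg) Hk).
Qed.

Lemma key_B P Q r s : 0 < P -> 0 < Q -> / r = 1 + / Q - / P -> 0 < s < 1 ->
  Yf Q s / (s * (1 - pw s Q)) * fG P Q (Yf Q s) - fF r Q s = 0.
Proof.
  intros hP hQ hr hs.
  pose proof (pw_lt1 s Q hQ (proj2 hs)) as hW1.
  rewrite (pw_pos s Q) in * by lra.
  set (ls := ln s) in *. set (W := exp (Q * ls)) in *.
  assert (hW : 0 < 1 - W) by lra.
  set (L := ln (1 - W)).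
  assert (e1 : 1 - W = exp L) by (unfold L; rewrite exp_ln; lra).
  assert (es : s = exp ls) by (unfold ls; rewrite exp_ln; lra).
  assert (eY : Yf Q s = exp (ls - / Q * L)).
  { unfold Yf. rewrite (pw_pos s Q) by lra. fold ls W. rewrite (pw_pos (1 - W)) by lra. fold L. rewrite es at 1. unfold Rminus. rewrite exp_plus, exp_Ropp. reflexivity. }
  unfold fG, fF. rewrite eY. rewrite (pw_pos (exp _)) by apply exp_pos. rewrite ln_exp.
  replace (exp (Q * (ls - / Q * L))) with (W / (1 - W)).
  2:{ rewrite e1. unfold W. unfold Rdiv. rewrite <- exp_Ropp, <- exp_plus. f_equal. field. lra. }
  replace (1 + W / (1 - W)) with (exp (- L)) by (rewrite exp_Ropp, <- e1; field; lra).
  rewrite (pw_pos (exp (-L))) by apply exp_pos. rewrite ln_exp.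
  rewrite (pw_pos s Q) by lra. fold ls W. rewrite (pw_pos (1 - W)) by lra. fold L.
  replace (s * (1 - W)) with (exp (ls + L)) by (rewrite exp_plus, <- e1, <- es; reflexivity).
  unfold Rdiv. rewrite <- exp_Ropp, <- !exp_plus.
  apply Rminus_diag_eq. clearbody L W ls. assert (EE: ls - / Q * L + - (ls + L) + - / P * - L = - / r * L). { rewrite hr. ring. } rewrite EE. reflexivity.
Qed.

Lemma B_gen P Q r s : 0 < P -> 0 < Q -> / r = 1 + / Q - / P -> 0 <= s < 1 ->
  G_pq P Q (Yf Q s) = F_pq r Q s.
Proof.
  intros hP hQ hr hs.
  enough (H : (fun t => G_pq P Q (Yf Q t) - F_pq r Q t) s = 0) by (cbv beta in H; lra).
  apply (const0 (fun t => G_pq P Q (Yf Q t) - F_pq r Q t) 1); [| | |exact hs].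
  - intros x hx. eapply deriv_comp_minus.
    + apply G_deriv; auto.
    + apply Y_deriv; auto.
    + apply F_deriv; lra.
    + apply key_B; auto.
  - intros x hx. apply cont_minus.
    + apply (continuous_comp (Yf Q) (G_pq P Q)).
      * unfold Yf. apply cont_div. apply continuous_id.
        apply cont_pw_comp. apply cont_minus. apply continuous_const. now apply pw_cont.
        right. pose proof (pw_lt1 x Q hQ ltac:(lra)); lra.
        apply Rgt_not_eq, pw_gt0. pose proof (pw_lt1 x Q hQ ltac:(lra)); lra.
      * apply (ex_derive_continuous (K:=R_AbsRing) (V:=R_NormedModule)). eexists. apply G_deriv; auto.
    + apply (ex_derive_continuous (K:=R_AbsRing) (V:=R_NormedModule)). eexists. apply F_deriv; lra.
  - cbv beta. unfold Yf. rewrite (pw_nonpos 0) by lra. unfold Rdiv. rewrite Rmult_0_l. rewrite G_0, F_0. ring.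
Qed.

Lemma pw_pw x a b : 0 < x -> pw (pw x a) b = pw x (a * b).
Proof. intros h. rewrite (pw_pos (pw x a)) by (apply pw_gt0; auto). rewrite ln_pw by auto. rewrite pw_pos by auto. f_equal; ring. Qed.
Lemma pw_1 x : 0 < x -> pw x 1 = x.
Proof. intros h. rewrite pw_pos by auto. rewrite Rmult_1_l. apply exp_ln; auto. Qed.

Definition uf q s := pw 2 (2 / q) * s / pw (1 + pw s (q / 2)) (2 / q).

Lemma uf0 q : uf q 0 = 0.
Proof. unfold uf. unfold Rdiv. ring. Qed.

Lemma uf_exp q s : 0 < q -> 0 < s ->
  uf q s = exp (2 / q * ln 2 + ln s - 2 / q * ln (1 + exp (q / 2 * ln s))).
Proof.
  intros hq hs. unfold uf. rewrite (pw_pos s) by auto.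
  rewrite (pw_pos 2) by lra. rewrite (pw_pos (1 + _)) by (pose proof (exp_pos (q/2 * ln s)); lra).
  unfold Rminus. rewrite !exp_plus, exp_Ropp, exp_ln by auto. unfold Rdiv. reflexivity.
Qed.

Lemma uf_alt q s : 0 < q -> 0 < s ->
  uf q s = pw (2 * pw s (q/2) / (1 + pw s (q/2))) (2 / q).
Proof.
  intros hq hs. rewrite uf_exp by auto.
  assert (hw : 0 < pw s (q/2)) by (apply pw_gt0; auto).
  rewrite pw_pos by (apply Rdiv_lt_0_compat; lra).
  rewrite ln_div by lra. rewrite ln_mult by lra. rewrite ln_pw by auto.
  rewrite (pw_pos s) by auto. f_equal. field. lra.
Qed.

Lemma uf_range q s : 0 < q -> 0 <= s < 1 -> 0 <= uf q s < 1.
Proof.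
  intros hq [[hs|hs] hs1].
  - rewrite uf_alt by auto.
    assert (hw : 0 < pw s (q/2)) by (apply pw_gt0; auto).
    assert (hw1 : pw s (q/2) < 1) by (apply pw_lt1; lra).
    split. apply pw_ge0.
    rewrite pw_pos by (apply Rdiv_lt_0_compat; lra).
    assert (ln (2 * pw s (q / 2) / (1 + pw s (q / 2))) < 0).
    { rewrite <- ln_1. apply ln_increasing. apply Rdiv_lt_0_compat; lra.
      apply Rlt_div_l; lra. }
    assert (0 < 2 / q) by (apply Rdiv_lt_0_compat; lra).
    assert (2 / q * ln (2 * pw s (q / 2) / (1 + pw s (q / 2))) < 0)
      by (rewrite <- (Rmult_0_r (2/q)); apply Rmult_lt_compat_l; auto).
    apply Rlt_le_trans with (exp 0). apply exp_increasing; auto. rewrite exp_0; lra.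
  - subst. rewrite uf0. lra.
Qed.

Lemma uf_surj q y : 0 < q -> 0 <= y < 1 -> exists s, 0 <= s < 1 /\ uf q s = y.
Proof.
  intros hq [[hy|hy] hy1].
  - set (U := pw y (q/2)).
    assert (hU : 0 < U) by (apply pw_gt0; auto).
    assert (hU1 : U < 1) by (apply pw_lt1; lra).
    set (s := pw (U / (2 - U)) (2 / q)).
    assert (hs : 0 < s) by (apply pw_gt0; apply Rdiv_lt_0_compat; lra).
    exists s. split. split. lra.
    + unfold s. apply pw_lt1. apply Rdiv_lt_0_compat; lra. apply Rlt_div_l; lra.
    + rewrite uf_alt by auto. unfold s. rewrite pw_pw by (apply Rdiv_lt_0_compat; lra).
      replace (2 / q * (q / 2)) with 1 by (field; lra).
      rewrite pw_1 by (apply Rdiv_lt_0_compat; lra).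
      replace (2 * (U / (2 - U)) / (1 + U / (2 - U))) with U by (field; lra).
      unfold U. rewrite pw_pw by auto. replace (q / 2 * (2 / q)) with 1 by (field; lra).
      apply pw_1; auto.
  - subst. exists 0. split. lra. apply uf0.
Qed.

Lemma uf_deriv q s : 0 < q -> 0 < s < 1 ->
  is_derive (uf q) s (uf q s / (s * (1 + pw s (q/2)))).
Proof.
  intros hq hs.
  assert (Hloc : locally s (fun t => exp (2 / q * ln 2 + ln t - 2 / q * ln (1 + exp (q / 2 * ln t))) = uf q t)).
  { apply locally_interval with 0 p_infty; simpl; try lra; auto.
    intros t ht _. symmetry. apply uf_exp; auto. }
  eapply is_derive_ext_loc. exact Hloc.
  rewrite <- (locally_singleton _ _ Hloc). rewrite pw_pos by lra.
  assert (0 < exp (q / 2 * ln s)) by apply exp_pos.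
  auto_derive. repeat split; lra.
  set (W := exp (q / 2 * ln s)) in *.
  set (E := exp (2 / q * ln 2 + ln s + - (2 / q * ln (1 + W)))).
  replace (exp (2 / q * ln 2 + ln s - 2 / q * ln (1 + W))) with E by (unfold E; f_equal; ring).
  clearbody E W. field. repeat split; lra.
Qed.

Lemma key_A q s : 0 < q -> 0 < s < 1 ->
  uf q s / (s * (1 + pw s (q/2))) * fF (2 * q / (2 + q)) (q / 2) (uf q s)
  - fF (2 * q / (2 + q)) q s * pw 2 (2 / q) = 0.
Proof.
  intros hq hs.
  pose proof (pw_lt1 s (q/2) ltac:(lra) (proj2 hs)) as hw1.
  pose proof (pw_gt0 s (q/2) (proj1 hs)) as hw0.
  assert (eu : uf q s = exp (2 / q * ln 2 + ln s - 2 / q * ln (1 + pw s (q/2)))).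
  { rewrite uf_exp by lra. rewrite (pw_pos s) by lra. reflexivity. }
  assert (ew2 : pw s q = pw s (q/2) * pw s (q/2)).
  { rewrite !pw_pos by lra. rewrite <- exp_plus. f_equal. field. }
  unfold fF. rewrite ew2.
  set (w := pw s (q/2)) in *.
  assert (epu : pw (uf q s) (q/2) = 2 * w / (1 + w)).
  { rewrite pw_pos by (rewrite eu; apply exp_pos). rewrite eu, ln_exp.
    replace (q / 2 * (2 / q * ln 2 + ln s - 2 / q * ln (1 + w))) with (ln 2 + q/2 * ln s - ln (1 + w)) by (field; lra).
    unfold Rminus. rewrite !exp_plus, exp_Ropp, exp_ln by lra.
    unfold w. rewrite (pw_pos s (q/2)) by lra. rewrite exp_ln by (pose proof (exp_pos (q/2 * ln s)); lra).
    field. pose proof (exp_pos (q/2 * ln s)); lra. }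
  rewrite epu. rewrite eu.
  set (N := ln (1 - w)). set (M := ln (1 + w)).
  assert (eN : 1 - w = exp N) by (unfold N; rewrite exp_ln; lra).
  assert (eM : 1 + w = exp M) by (unfold M; rewrite exp_ln; lra).
  assert (es : s = exp (ln s)) by (rewrite exp_ln; lra).
  replace (1 - 2 * w / (1 + w)) with (exp (N - M)) by (unfold Rminus at 1; rewrite exp_plus, exp_Ropp, <- eN, <- eM; field; lra).
  replace (1 - w * w) with (exp (N + M)) by (rewrite exp_plus, <- eN, <- eM; ring).
  replace (s * (1 + w)) with (exp (ln s + M)) by (rewrite exp_plus, <- eM, <- es; reflexivity).
  rewrite !(pw_pos (exp _)) by apply exp_pos. rewrite !ln_exp.
  rewrite (pw_pos 2) by lra.
  clearbody N M w.
  unfold Rdiv at 1. rewrite <- exp_Ropp, <- !exp_plus.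
  apply Rminus_diag_eq.
  match goal with |- exp ?a = exp ?b => assert (EE : a = b) end.
  { field. lra. }
  rewrite EE. reflexivity.
Qed.

Lemma uf_cont q x : 0 < q -> 0 <= x < 1 -> continuous (uf q) x.
Proof.
  intros hq hx. unfold uf. apply cont_div.
  - apply cont_mult. apply continuous_const. apply continuous_id.
  - apply cont_pw_comp. apply cont_plus. apply continuous_const. apply pw_cont; lra.
    right. pose proof (pw_ge0 x (q/2)); lra.
  - apply Rgt_not_eq, pw_gt0. pose proof (pw_ge0 x (q/2)); lra.
Qed.

Lemma A_id q s : 0 < q -> 0 <= s < 1 ->
  F_pq (2 * q / (2 + q)) (q / 2) (uf q s) = F_pq (2 * q / (2 + q)) q s * pw 2 (2 / q).
Proof.
  intros hq hs. set (p := 2 * q / (2 + q)).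
  enough (H : (fun t => F_pq p (q/2) (uf q t) - F_pq p q t * pw 2 (2/q)) s = 0) by (cbv beta in H; lra).
  apply (const0 (fun t => F_pq p (q/2) (uf q t) - F_pq p q t * pw 2 (2/q)) 1); [| | |exact hs].
  - intros x hx. eapply deriv_comp_minus.
    + apply F_deriv. lra. apply uf_range; lra.
    + apply uf_deriv; auto.
    + apply (is_derive_scal_l (F_pq p q) x (fF p q x) (pw 2 (2/q))). apply F_deriv; lra.
    + apply key_A; auto.
  - intros x hx. apply cont_minus.
    + apply (continuous_comp (uf q) (F_pq p (q/2))). apply uf_cont; auto.
      apply (ex_derive_continuous (K:=R_AbsRing) (V:=R_NormedModule)). eexists. apply F_deriv. lra. apply uf_range; lra.
    + apply cont_mult; [|apply continuous_const].
      apply (ex_derive_continuous (K:=R_AbsRing) (V:=R_NormedModule)). eexists. apply F_deriv; lra.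
  - cbv beta. rewrite uf0, !F_0. ring.
Qed.

Lemma pw_exp a b : pw (exp a) b = exp (b * a).
Proof. rewrite pw_pos by apply exp_pos. rewrite ln_exp. reflexivity. Qed.
Lemma div_exp a b : exp a / exp b = exp (a - b).
Proof. unfold Rdiv, Rminus. rewrite exp_plus, exp_Ropp. reflexivity. Qed.
Lemma exp_eq a b : a = b -> exp a = exp b.
Proof. intros ->; reflexivity. Qed.

Section Alg.
Variables q s : R.
Hypothesis hq : 0 < q.
Hypothesis hs : 0 < s < 1.

Let ls := ln s.
Let w := pw s (q/2).
Lemma w_pos : 0 < w. Proof. apply pw_gt0; lra. Qed.
Lemma w_lt1 : w < 1. Proof. apply pw_lt1; lra. Qed.
Let N := ln (1 - w).
Let M := ln (1 + w).
Lemma eN : 1 - w = exp N. Proof. unfold N; rewrite exp_ln; [|pose proof w_lt1]; lra. Qed.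
Lemma eM : 1 + w = exp M. Proof. unfold M; rewrite exp_ln; [|pose proof w_pos]; lra. Qed.
Lemma es : s = exp ls. Proof. unfold ls; rewrite exp_ln; lra. Qed.
Lemma ew : w = exp (q/2 * ls). Proof. unfold w. rewrite pw_pos by lra. reflexivity. Qed.
Lemma ew2 : pw s q = w * w.
Proof. rewrite ew, pw_pos by lra. rewrite <- exp_plus. apply exp_eq. unfold ls. field. Qed.
Lemma e1w2 : 1 - w * w = exp (N + M).
Proof. rewrite exp_plus, <- eN, <- eM. ring. Qed.
Lemma ec : pw 2 (2/q) = exp (2/q * ln 2).
Proof. rewrite pw_pos by lra. reflexivity. Qed.
Lemma e2w : 2 * w = exp (ln 2 + q/2 * ls).
Proof. rewrite exp_plus, exp_ln, <- ew by lra. reflexivity. Qed.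

Lemma esh : Yf q s = exp (ls - / q * (N + M)).
Proof. unfold Yf. rewrite ew2, e1w2, pw_exp, es at 1. rewrite div_exp. reflexivity. Qed.

Lemma euf : uf q s = exp (2 / q * ln 2 + ls - 2 / q * M).
Proof. rewrite uf_exp by lra. unfold M. rewrite ew. unfold ls. reflexivity. Qed.

Lemma euf_pow : 1 - pw (uf q s) (q/2) = exp (N - M).
Proof.
  rewrite euf, pw_exp.
  replace (q / 2 * (2 / q * ln 2 + ls - 2 / q * M)) with ((ln 2 + q/2 * ls) - M) by (field; lra).
  rewrite <- div_exp, <- e2w, <- eM, <- div_exp, <- eN, <- eM.
  field. pose proof w_pos; lra.
Qed.

Lemma ech : / fG 2 q (Yf q s) = exp (- (N + M) / 2).
Proof.
  unfold fG. rewrite esh, pw_exp.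
  replace (q * (ls - / q * (N + M))) with (q * ls - (N + M)) by (field; lra).
  rewrite <- div_exp. replace (exp (q * ls)) with (w * w) by (rewrite ew, <- exp_plus; apply exp_eq; field).
  rewrite <- e1w2.
  replace (1 + w * w / (1 - w * w)) with (/ (1 - w * w)) by (field; pose proof w_pos; pose proof w_lt1; nra).
  rewrite e1w2, <- exp_Ropp, pw_exp, <- exp_Ropp. apply exp_eq. field.
Qed.

Lemma ev : pw (Yf q s) (q/2) = w * exp (- (N + M) / 2).
Proof.
  rewrite esh, pw_exp, ew, <- exp_plus. apply exp_eq. field. lra.
Qed.

Lemma ech_v : / fG 2 q (Yf q s) + pw (Yf q s) (q/2) = exp ((M - N) / 2).
Proof.
  rewrite ech, ev. replace (exp (- (N + M) / 2) + w * exp (- (N + M) / 2)) with ((1 + w) * exp (- (N + M) / 2)) by ring.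
  rewrite eM, <- exp_plus. apply exp_eq. field.
Qed.

Lemma key_sinh :
  Yf (q/2) (uf q s) = pw 2 (2/q) * Yf q s * pw (/ fG 2 q (Yf q s) + pw (Yf q s) (q/2)) (2/q).
Proof.
  rewrite ech_v, pw_exp, esh, ec. unfold Yf. rewrite euf_pow, pw_exp, euf, div_exp.
  rewrite <- !exp_plus. apply exp_eq. field. lra.
Qed.

Lemma key_cosh :
  / fG (2 * q / (2 + q)) (q/2) (Yf (q/2) (uf q s)) =
  pw (/ fG 2 q (Yf q s) + pw (Yf q s) (q/2)) (2/q + 1).
Proof.
  rewrite ech_v, pw_exp. unfold fG. unfold Yf. rewrite euf_pow, pw_exp, euf, div_exp.
  rewrite pw_exp.
  replace (q / 2 * (2 / q * ln 2 + ls - 2 / q * M - / (q / 2) * (N - M))) with ((ln 2 + q/2 * ls) - N) by (field; lra).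
  rewrite <- div_exp, <- e2w, <- eN.
  replace (1 + 2 * w / (1 - w)) with ((1 + w) / (1 - w)) by (field; pose proof w_lt1; lra).
  rewrite eM, eN, div_exp, pw_exp, <- exp_Ropp. apply exp_eq. field. lra.
Qed.

Lemma key_cos :
  / fF (2 * q / (2 + q)) (q/2) (uf q s) =
  pw ((1 - pw s (q / 2)) / (1 + pw s (q / 2))) (1 / q + 1 / 2).
Proof.
  unfold fF. rewrite euf_pow, pw_exp. fold w. rewrite eN, eM, div_exp, pw_exp, <- exp_Ropp.
  apply exp_eq. field. lra.
Qed.
End Alg.

Lemma lub_scale (E : R -> Prop) c : 0 < c ->
  Lub_Rbar (fun z => E (z / c)) = Rbar_mult c (Lub_Rbar E).
Proof.
  intros hc. assert (hic : 0 < / c) by (apply Rinv_0_lt_compat; auto).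
  apply is_lub_Rbar_unique.
  destruct (Lub_Rbar_correct E) as [Hub Hlst].
  set (L := Lub_Rbar E) in *. split.
  - intros z hz. specialize (Hub _ hz). destruct L as [l| |].
    + simpl in *. assert (z = (z/c)*c) by (field; lra). nra.
    + rewrite Rbar_mult_pinf; auto. simpl. auto.
    + simpl in Hub. contradiction.
  - intros b hb.
    assert (Hb' : is_ub_Rbar E (Rbar_mult (/ c) b)).
    { intros x hx. assert (h2 : E ((c * x) / c)) by (replace (c * x / c) with x by (field; lra); auto).
      specialize (hb _ h2). destruct b as [b| |].
      - simpl in *. assert (/ c * (c * x) = x) by (field; lra). nra.
      - rewrite Rbar_mult_pinf by auto. simpl; auto.
      - simpl in hb. contradiction. }
    specialize (Hlst _ Hb'). destruct b as [b| |].
    + destruct L as [l| |].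
      * simpl in *. assert (c * (/ c * b) = b) by (field; lra). nra.
      * simpl in Hlst. contradiction.
      * rewrite Rbar_mult_minf by auto. simpl; auto.
    + destruct L as [l| |].
      * simpl; auto.
      * rewrite Rbar_mult_pinf by auto. simpl; auto.
      * rewrite Rbar_mult_minf by auto. simpl; auto.
    + rewrite Rbar_mult_minf in Hlst by auto. destruct L as [l| |].
      * simpl in Hlst. contradiction.
      * simpl in Hlst. contradiction.
      * rewrite Rbar_mult_minf by auto. simpl; auto.
Qed.

Lemma sin_spec P Q y : 0 < Q -> 0 <= y -> Rbar_lt y (Lub_Rbar (SF P Q)) ->
  (0 <= sin_pq P Q y < 1) /\ F_pq P Q (sin_pq P Q y) = y.
Proof.
  intros hQ hy hL. destruct (F_range P Q y hQ hy hL) as [z hz].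
  unfold sin_pq. exact (epsilon_spec (inhabits 0) (fun y0 => 0 <= y0 < 1 /\ F_pq P Q y0 = y) (ex_intro _ z hz)).
Qed.

Lemma sin_eq P Q y z : 0 < Q -> 0 <= z < 1 -> F_pq P Q z = y -> sin_pq P Q y = z.
Proof.
  intros hQ hz hF.
  pose proof (epsilon_spec (inhabits 0) (fun y0 => 0 <= y0 < 1 /\ F_pq P Q y0 = y) (ex_intro _ z (conj hz hF))) as [h1 h2].
  fold (sin_pq P Q y) in h1, h2. apply (F_inj P Q); try lra; congruence.
Qed.

Lemma sinh_eq P Q y z : 0 < Q -> 0 <= z -> G_pq P Q z = y -> sinh_pq P Q y = z.
Proof.
  intros hQ hz hG.
  pose proof (epsilon_spec (inhabits 0) (fun y0 => 0 <= y0 /\ G_pq P Q y0 = y) (ex_intro _ z (conj hz hG))) as [h1 h2].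
  fold (sinh_pq P Q y) in h1, h2. apply (G_inj P Q); try lra; congruence.
Qed.

Lemma Yf_nonneg Q s : 0 <= s -> 0 <= Yf Q s.
Proof.
  intros hs. unfold Yf, Rdiv. apply Rmult_le_pos; auto.
  destruct (pw_ge0 (1 - pw s Q) (/ Q)) as [h|h].
  - left. apply Rinv_0_lt_compat; auto.
  - rewrite <- h, Rinv_0. lra.
Qed.

Lemma Yf0 Q : Yf Q 0 = 0.
Proof. unfold Yf, Rdiv. ring. Qed.

Lemma sinh_spec P Q r y : 0 < P -> 0 < Q -> / r = 1 + / Q - / P -> 0 <= y ->
  Rbar_lt y (Lub_Rbar (SF r Q)) ->
  0 <= sinh_pq P Q y /\ G_pq P Q (sinh_pq P Q y) = y.
Proof.
  intros hP hQ hr hy hL. destruct (sin_spec r Q y hQ hy hL) as [hs hF].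
  assert (E : sinh_pq P Q y = Yf Q (sin_pq r Q y)).
  { apply sinh_eq; auto. apply Yf_nonneg; lra. rewrite (B_gen P Q r); auto. }
  rewrite E. split. apply Yf_nonneg; lra. rewrite (B_gen P Q r); auto.
Qed.

Lemma pi_eq P Q : pi_pq P Q = Rbar_mult 2 (Lub_Rbar (SF P Q)).
Proof. reflexivity. Qed.

Lemma pw_1l a : pw 1 a = 1.
Proof. rewrite pw_pos by lra. rewrite ln_1, Rmult_0_r. apply exp_0. Qed.
Lemma pw_0l a : pw 0 a = 0.
Proof. apply pw_nonpos; lra. Qed.

Lemma key_cos' q s : 0 < q -> 0 <= s < 1 ->
  / fF (2 * q / (2 + q)) (q/2) (uf q s) =
  pw ((1 - pw s (q / 2)) / (1 + pw s (q / 2))) (1 / q + 1 / 2).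
Proof.
  intros hq [[hs|hs] hs1]. apply key_cos; auto.
  subst. unfold fF. rewrite uf0, !pw_0l. rewrite Rminus_0_r, Rplus_0_r, Rdiv_1_r, !pw_1l. apply Rinv_1.
Qed.

Lemma key_sinh' q s : 0 < q -> 0 <= s < 1 ->
  Yf (q/2) (uf q s) = pw 2 (2/q) * Yf q s * pw (/ fG 2 q (Yf q s) + pw (Yf q s) (q/2)) (2/q).
Proof.
  intros hq [[hs|hs] hs1]. apply key_sinh; auto.
  subst. rewrite uf0, !Yf0. ring.
Qed.

Lemma key_cosh' q s : 0 < q -> 0 <= s < 1 ->
  / fG (2 * q / (2 + q)) (q/2) (Yf (q/2) (uf q s)) =
  pw (/ fG 2 q (Yf q s) + pw (Yf q s) (q/2)) (2/q + 1).
Proof.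
  intros hq [[hs|hs] hs1]. apply key_cosh; auto.
  subst. rewrite uf0, !Yf0. unfold fG. rewrite !pw_0l, Rplus_0_r, !pw_1l, Rinv_1, Rplus_0_r. symmetry. apply pw_1l.
Qed.

Lemma r_of_2 q : 0 < q -> r_of 2 q = 2 * q / (2 + q).
Proof. intros hq. unfold r_of. field. lra. Qed.
Lemma r_of_p q : 0 < q -> r_of (2 * q / (2 + q)) (q / 2) = 2 * q / (2 + q).
Proof.
  intros hq. unfold r_of.
  replace (2 * q / (2 + q) * (q / 2) + 2 * q / (2 + q) - q / 2) with (q / 2) by (field; lra).
  field. lra.
Qed.

Lemma pw2 q : 0 < q -> pw 2 (2 / q + 1) = pw 2 (2 / q) * 2.
Proof. intros hq. rewrite !pw_pos by lra. rewrite Rmult_plus_distr_r, exp_plus, Rmult_1_l, exp_ln by lra. reflexivity. Qed.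

Theorem theorem4p1 (q : R) (hq : 0 < q) :
  let p := 2 * q / (2 + q) in
  Rbar_mult (/ pw 2 (2 / q + 1)) (pi_pq p (q / 2))
    = Rbar_mult (/ 2) (pi_pq p q) /\
  (forall x : R, 0 <= x -> Rbar_lt x (Rbar_mult (/ 2) (pi_pq p q)) ->
    let s := sin_pq p q x in
    let sh := sinh_pq 2 q x in
    sin_pq p (q / 2) (pw 2 (2 / q) * x)
      = pw 2 (2 / q) * s / pw (1 + pw s (q / 2)) (2 / q) /\
    is_cos_pq p (q / 2) (pw 2 (2 / q) * x)
      (pw ((1 - pw s (q / 2)) / (1 + pw s (q / 2))) (1 / q + 1 / 2)) /\
    (exists ch : R, is_cosh_pq 2 q x ch /\
      sinh_pq p (q / 2) (pw 2 (2 / q) * x)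
        = pw 2 (2 / q) * sh * pw (ch + pw sh (q / 2)) (2 / q) /\
      is_cosh_pq p (q / 2) (pw 2 (2 / q) * x)
        (pw (ch + pw sh (q / 2)) (2 / q + 1)))).
Proof.
  intros p. subst p.
  set (p := 2 * q / (2 + q)).
  assert (hp : 0 < p) by (unfold p; apply Rdiv_lt_0_compat; lra).
  assert (hq2 : 0 < q / 2) by lra.
  set (c := pw 2 (2 / q)).
  assert (hc : 0 < c) by (apply pw_gt0; lra).
  assert (HL2 : Lub_Rbar (SF p (q/2)) = Rbar_mult c (Lub_Rbar (SF p q))).
  { rewrite <- lub_scale by auto. apply Lub_Rbar_eqset. intros z. split.
    - intros [y [hy ->]]. destruct (uf_surj q y hq hy) as [s [hs <-]].
      exists s. split; auto. unfold p. rewrite A_id by auto. fold c. field. lra.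
    - intros [s [hs E]]. exists (uf q s). split. apply uf_range; auto.
      unfold p. rewrite A_id by auto. fold p. fold c. rewrite <- E. field. lra. }
  split.
  { rewrite !pi_eq, HL2, pw2 by auto. fold c.
    rewrite !Rbar_mult_mult; try lra.
    replace (/ (c * 2) * 2 * c) with 1 by (field; lra).
    replace (/ 2 * 2) with 1 by field. reflexivity.
    all: assert (0 < / (c * 2)) by (apply Rinv_0_lt_compat; nra); nra. }
  intros x hx hxL s sh.
  rewrite half_pi in hxL.
  destruct (sin_spec p q x hq hx hxL) as [hs hFs]. fold s in hs, hFs.
  assert (hcx0 : 0 <= c * x) by nra.
  assert (hcx : Rbar_lt (c * x) (Lub_Rbar (SF p (q/2)))).
  { rewrite HL2. destruct (Lub_Rbar (SF p q)) as [l| |].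
    - simpl in *. nra.
    - rewrite Rbar_mult_pinf; simpl; auto.
    - simpl in hxL. contradiction. }
  assert (hFu : F_pq p (q/2) (uf q s) = c * x).
  { unfold p. rewrite A_id by auto. fold p. fold c. rewrite hFs. ring. }
  assert (hsin : sin_pq p (q/2) (c * x) = uf q s).
  { apply sin_eq; auto. apply uf_range; auto. }
  assert (hsh : sh = Yf q s).
  { apply sinh_eq; auto. apply Yf_nonneg; lra. rewrite (B_gen 2 q p); auto. lra. unfold p; field; lra. }
  assert (hSh : sinh_pq p (q/2) (c * x) = Yf (q/2) (uf q s)).
  { apply sinh_eq; auto. apply Yf_nonneg; apply uf_range; auto.
    rewrite (B_gen p (q/2) p); auto. unfold p; field; lra. apply uf_range; auto. }
  split. { exact hsin. }
  split.
  { unfold is_cos_pq. rewrite half_pi. fold c. rewrite <- key_cos' by auto. fold p. rewrite <- hsin.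
    apply inv_deriv with (Phi := F_pq p (q/2)) (A := Finite 1); auto.
    - intros y hy hyB. destruct (sin_spec p (q/2) y hq2 hy hyB) as [[h1 h2] h3]. simpl. auto.
    - intros a b ha hab hb. simpl in hb. apply F_strict; auto.
    - apply F_deriv; auto. rewrite hsin. apply uf_range; auto.
    - apply fF_pos; auto. rewrite hsin. apply uf_range; auto. }
  exists (/ fG 2 q sh).
  split.
  { unfold is_cosh_pq. rewrite r_of_2 by auto. fold p. rewrite half_pi.
    apply inv_deriv with (Phi := G_pq 2 q) (A := p_infty); auto.
    - intros y hy hyB. destruct (sinh_spec 2 q p y ltac:(lra) hq ltac:(unfold p; field; lra) hy hyB). simpl. auto.
    - intros a b ha hab hb. apply G_strict; auto.
    - apply G_deriv; auto.
    - apply fG_pos. }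
  split.
  { fold c. rewrite hSh, hsh. apply key_sinh'; auto. }
  { unfold is_cosh_pq. assert (hrp : r_of p (q/2) = p) by (unfold p; apply r_of_p; auto). rewrite hrp. rewrite half_pi. fold c.
    rewrite hsh, <- key_cosh' by auto. fold p. rewrite <- hSh.
    apply inv_deriv with (Phi := G_pq p (q/2)) (A := p_infty); auto.
    - intros y hy hyB. destruct (sinh_spec p (q/2) p y hp hq2 ltac:(unfold p; field; lra) hy hyB). simpl. auto.
    - intros a b ha hab hb. apply G_strict; auto.
    - apply G_deriv; auto.
    - apply fG_pos. }
Qed.
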